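(* In the setting described in the context, let $0<h<h_\circ$ and $\mathcal D_{v,\circ}^h=\{x\in\mathbb R^d:1/2\le\Phi_v^h(x)\le2\}$. Then $|\nabla\Phi_v^h(x)|\ge 1/(20d)$ for all $x\in\mathcal D_{v,\circ}^h$.
   Context: $B_r$ is the open ball of radius $r$ centered at $0$ in $\mathbb R^d$, $2\le d\le4$. Let $\phi:\mathbb R^d\to\mathbb R$ coincide on $[-1,1]^d$ with an analytic convex function of finite type defined on $[-2,2]^d$ and vanish outside $[-1,1]^d$; finite type means there are an integer $k\ge2$ and $m>0$ with $\sum_{j=2}^k\frac1{j!}|(u\cdot\nabla)^j\phi(x)|\ge m$ for all $x\in[-1,1]^d$ and unit vectors $u$. For $v\in\mathbb R^d$ with $-v\in\nabla\phi(B_{1/4})$, let $\omega_v\in B_{1/4}$ be the unique point with $\nabla\phi(\omega_v)=-v$ and $\Phi_v(x)=\phi(x+\omega_v)+v\cdot x-\phi(\omega_v)$. There is $c_\phi>0$ with $(c_\phi|x|)^k\le\Phi_v(x)$ on $B_{1/2}$ for all such $v$; fix $0<h_\circ\le(c_\phi/4)^k$. For $0<h<h_\circ$ let $\mathcal B_v^h=\{x\in B_{1/2}:\Phi_v(x)<h/2\}$, let $T_v^h$ be an invertible affine map of $\mathbb R^d$ with $B_1\subset(T_v^h)^{-1}\mathcal B_v^h\subset B_d$, and set $\Phi_v^h(x)=h^{-1}\Phi_v(T_v^hx)$. Standing assumption: $h_\circ$ is small enough that every $\Phi_v^h$ is defined, convex and of finite type on a ball $B_{R_\circ}$ with $R_\circ\ge100d$.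 *)

(* Defs.v *)
From HB Require Import structures.
From mathcomp Require Import all_boot all_order all_algebra.
From mathcomp Require Import all_classical all_reals all_analysis.
Set Implicit Arguments. Unset Strict Implicit. Unset Printing Implicit Defensive.
Import Order.TTheory GRing.Theory Num.Theory.
Import numFieldNormedType.Exports.
Local Open Scope classical_set_scope.
Local Open Scope ring_scope.

Section Defs.
Variables (R : realType) (d : nat).
Notation V := 'rV[R]_d.

Definition dotv (x y : V) : R := \sum_(i < d) x 0 i * y 0 i.
Definition enorm (x : V) : R := Num.sqrt (dotv x x).

Definition eball (r : R) : set V := [set x | enorm x < r].

Definition cube (a : R) : set V := [set x | forall i, - a <= x 0 i <= a].

Definition dder (u : V) (f : V -> R) : V -> R := fun x => 'D_u f x.
Definition dder_iter (j : nat) (u : V) (f : V -> R) : V -> R := iter j (dder u) f.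

Definition grad (f : V -> R) (x : V) : V :=
  \row_(i < d) 'D_(delta_mx 0 i : V) f x.

Definition convex_on (S : set V) (f : V -> R) : Prop :=
  forall x y (t : R), S x -> S y -> 0 <= t <= 1 ->
    f (t *: x + (1 - t) *: y) <= t * f x + (1 - t) * f y.

Definition finite_type_km (S : set V) (f : V -> R) (k : nat) (m : R) : Prop :=
  (2 <= k)%N /\ 0 < m /\
  forall x u, S x -> enorm u = 1 ->
    m <= \sum_(2 <= j < k.+1) (j`!%:R)^-1 * `|dder_iter j u f x|.

Definition finite_type_on (S : set V) (f : V -> R) : Prop :=
  exists k m, finite_type_km S f k m.

(* real analyticity on S: around each a in S, f is given by an absolutely
   convergent multivariate power series  f(a+y) = sum_alpha c_alpha y^alpha
   (for y small with a+y in S); the series is summed over growing boxes of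
   multi-indices. *)
Definition monom (al : 'I_d -> nat) (y : V) : R := \prod_(i < d) y 0 i ^+ al i.
Definition box_psum (c : ('I_d -> nat) -> R) (y : V) (N : nat) : R :=
  \sum_(al : {ffun 'I_d -> 'I_N.+1}) c (fun i => nat_of_ord (al i)) * monom (fun i => nat_of_ord (al i)) y.
Definition box_abssum (c : ('I_d -> nat) -> R) (y : V) (N : nat) : R :=
  \sum_(al : {ffun 'I_d -> 'I_N.+1}) `|c (fun i => nat_of_ord (al i)) * monom (fun i => nat_of_ord (al i)) y|.

Definition analytic_on (S : set V) (f : V -> R) : Prop :=
  forall a, S a -> exists2 r : R, 0 < r &
    exists c : ('I_d -> nat) -> R,
      forall y, enorm y < r -> S (a + y) ->
        (exists M : R, forall N, box_abssum c y N <= M) /\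
        (box_psum c y @ \oo --> f (a + y)).

Definition Phi (psi : V -> R) (v om : V) (x : V) : R :=
  psi (x + om) + dotv v x - psi om.

Definition sublev (psi : V -> R) (v om : V) (h : R) : set V :=
  [set x | eball (2^-1) x /\ Phi psi v om x < h / 2].

Definition affine (A : 'M[R]_d) (b : V) (x : V) : V := x *m A + b.

Definition Phih (psi : V -> R) (v om : V) (h : R) (A : 'M[R]_d) (b : V) (x : V) : R :=
  h^-1 * Phi psi v om (affine A b x).

End Defs.

(* Main.v *)
Require Import Defs.
From HB Require Import structures.
From mathcomp Require Import all_boot all_order all_algebra.
From mathcomp Require Import all_classical all_reals all_analysis.
From mathcomp Require Import ring lra.
Import Order.TTheory GRing.Theory Num.Theory.
Import numFieldNormedType.Exports.
Local Open Scope classical_set_scope.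
Local Open Scope ring_scope.
Set Implicit Arguments. Unset Strict Implicit. Unset Printing Implicit Defensive.

Section Norm.
Variables (R : realType) (d : nat).
Notation V := 'rV[R]_d.

Lemma dotvDr (a x y : V) : dotv a (x + y) = dotv a x + dotv a y.
Proof. by rewrite /dotv -big_split /=; apply: eq_bigr => i _; rewrite mxE mulrDr. Qed.
Lemma dotvZr (a x : V) t : dotv a (t *: x) = t * dotv a x.
Proof. by rewrite /dotv mulr_sumr; apply: eq_bigr => i _; rewrite mxE mulrCA. Qed.
Lemma dotvC (x y : V) : dotv x y = dotv y x.
Proof. by apply: eq_bigr => i _; rewrite mulrC. Qed.
Lemma dotv0r (a : V) : dotv a 0 = 0.
Proof. by rewrite /dotv big1 // => i _; rewrite mxE mulr0. Qed.
Lemma dotvNr (a x : V) : dotv a (- x) = - dotv a x.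
Proof. by rewrite -scaleN1r dotvZr mulN1r. Qed.
Lemma dotvv_ge0 (x : V) : 0 <= dotv x x.
Proof. by apply: sumr_ge0 => i _; rewrite -expr2 sqr_ge0. Qed.
Lemma enorm_ge0 (x : V) : 0 <= enorm x.
Proof. exact: sqrtr_ge0. Qed.
Lemma enorm_sq (x : V) : enorm x ^+ 2 = dotv x x.
Proof. by rewrite /enorm sqr_sqrtr // dotvv_ge0. Qed.
Lemma enorm0 : enorm (0 : V) = 0.
Proof. by rewrite /enorm dotv0r sqrtr0. Qed.
Lemma enormZ t (x : V) : enorm (t *: x) = `|t| * enorm x.
Proof.
rewrite /enorm dotvZr dotvC dotvZr mulrA -expr2 sqrtrM ?sqr_ge0 //.
by rewrite sqrtr_sqr.
Qed.
Lemma enormN (x : V) : enorm (- x) = enorm x.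
Proof. by rewrite -scaleN1r enormZ normrN normr1 mul1r. Qed.

Lemma dotv_eq0 (x : V) : dotv x x = 0 -> x = 0.
Proof.
move=> /eqP; rewrite psumr_eq0; last by move=> i _; rewrite -expr2 sqr_ge0.
move=> /allP H; apply/rowP => i; rewrite mxE.
have := H i (mem_index_enum i); rewrite /= -expr2 sqrf_eq0 => /eqP //.
Qed.

Lemma CS (x y : V) : dotv x y <= enorm x * enorm y.
Proof.
have [x0|xn0] := eqVneq (enorm x) 0.
  have : dotv x x = 0 by rewrite -enorm_sq x0 expr0n.
  by move/dotv_eq0 => ->; rewrite dotvC dotv0r enorm0 mul0r.
have [y0|yn0] := eqVneq (enorm y) 0.
  have : dotv y y = 0 by rewrite -enorm_sq y0 expr0n.
  by move/dotv_eq0 => ->; rewrite dotv0r enorm0 mulr0.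
have xp : 0 < enorm x by rewrite lt0r xn0 enorm_ge0.
have yp : 0 < enorm y by rewrite lt0r yn0 enorm_ge0.
set a := enorm y / enorm x.
have ap : 0 < a by rewrite divr_gt0.
have H : 0 <= a ^+ 2 * enorm x ^+ 2 + enorm y ^+ 2 - 2 * a * dotv x y.
  have := dotvv_ge0 (a *: x - y).
  have -> : dotv (a *: x - y) (a *: x - y) = a ^+ 2 * enorm x ^+ 2 + enorm y ^+ 2 - 2 * a * dotv x y.
    rewrite !enorm_sq /dotv !mulr_sumr -big_split /= -sumrB; apply: eq_bigr => i _.
    rewrite !mxE; ring.
  by [].
have e : a ^+ 2 * enorm x ^+ 2 = enorm y ^+ 2.
  by rewrite /a expr_div_n mulfVK // expf_neq0.
have : 2 * a * dotv x y <= 2 * enorm y ^+ 2.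
  move: H; rewrite e; lra.
rewrite -mulrA ler_pM2l // => H2.
have : dotv x y <= enorm y ^+ 2 / a by rewrite ler_pdivlMr // mulrC.
move=> H3; apply: le_trans H3 _; rewrite /a invf_div le_eqVlt; apply/orP; left; apply/eqP.
by field.
Qed.

Lemma CSabs (x y : V) : `|dotv x y| <= enorm x * enorm y.
Proof.
rewrite ler_norml CS andbT -(enormN y) lerNl -dotvNr; exact: CS.
Qed.

Lemma enormD (x y : V) : enorm (x + y) <= enorm x + enorm y.
Proof.
rewrite -(ler_pXn2r (_ : (0 < 2)%N)) ?nnegrE ?addr_ge0 ?enorm_ge0 //.
have -> : enorm (x + y) ^+ 2 = enorm x ^+ 2 + enorm y ^+ 2 + 2 * dotv x y.
  rewrite !enorm_sq /dotv mulr_sumr -!big_split /=; apply: eq_bigr => i _.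
  rewrite !mxE; ring.
rewrite sqrrD.
have := CS x y; lra.
Qed.

Lemma coord_le_enorm (x : V) i : `|x 0 i| <= enorm x.
Proof.
rewrite -(ler_pXn2r (_ : (0 < 2)%N)) ?nnegrE ?enorm_ge0 //.
rewrite enorm_sq real_normK ?num_real // /dotv (bigD1 i) //= -expr2 lerDl.
by apply: sumr_ge0 => j _; rewrite -expr2 sqr_ge0.
Qed.

End Norm.

Section Der.
Variables (R : realType) (d : nat).
Notation V := 'rV[R]_d.

Lemma derive_of_bound (f : V -> R) (x u : V) (D τ C : R) : 0 < τ -> 0 <= C ->
  (forall t, t != 0 -> `|t| < τ -> `|(f (t *: u + x) - f x) / t - D| <= C * `|t|) ->
  'D_u f x = D.
Proof.
move=> tp C0 H.
apply: cvg_lim => //.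
apply/cvgrPdist_le => e e0.
have ep : 0 < Num.min τ (e / (C + 1)) by rewrite lt_min tp divr_gt0 // ltr_wpDl.
exists (Num.min τ (e / (C + 1))) => // t /= Ht tn0.
rewrite sub0r normrN lt_min in Ht; case/andP: Ht => Ht1 Ht2.
rewrite distrC; have -> : t^-1 *: (f (t *: u + x) - f x) = (f (t *: u + x) - f x) / t by rewrite mulrC.
apply: le_trans (H t tn0 Ht1) _.
rewrite ltr_pdivlMr ?ltr_wpDl // in Ht2.
have : C * `|t| <= `|t| * (C + 1) by rewrite mulrDr mulr1 mulrC lerDl.
move=> h; apply: le_trans h _; exact: ltW.
Qed.
End Der.

Section PS.
Variables (R : realType) (d : nat).
Notation V := 'rV[R]_d.

Definition nal N (al : {ffun 'I_d -> 'I_N.+1}) : 'I_d -> nat := fun i => nat_of_ord (al i).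
Definition deg N (al : {ffun 'I_d -> 'I_N.+1}) : nat := (\sum_i nal al i)%N.

Lemma monom_const (al : 'I_d -> nat) (r : R) :
  monom al (r *: const_mx 1 : V) = r ^+ (\sum_i al i)%N.
Proof.
rewrite /monom -prodrXr; apply: eq_bigr => i _; by rewrite !mxE mulr1.
Qed.

Lemma monom_le (al : 'I_d -> nat) (y : V) q :
  (forall i, `|y 0 i| <= q) -> `|monom al y| <= q ^+ (\sum_i al i)%N.
Proof.
move=> Hy; rewrite /monom normr_prod -prodrXr; apply: ler_prod => i _.
rewrite normrX exprn_ge0 ?normr_ge0 //=; apply: lerXn2r; rewrite ?nnegrE ?normr_ge0 //.
exact: le_trans (Hy i).
Qed.

Lemma term_le (c : ('I_d -> nat) -> R) (rho M q : R) N (al : {ffun 'I_d -> 'I_N.+1}) (y : V) :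
  0 < rho -> 0 <= q -> (forall i, `|y 0 i| <= q) ->
  (forall N, box_abssum c (rho *: const_mx 1) N <= M) ->
  `|c (nal al) * monom (nal al) y| <= M * (q / rho) ^+ deg al.
Proof.
move=> rp q0 Hy HM.
have h1 : `|c (nal al)| * rho ^+ deg al <= M.
  apply: le_trans (HM N); rewrite /box_abssum (bigD1 al) //=.
  apply: ler_wpDr; first by apply: sumr_ge0 => ? _.
  by rewrite monom_const normrM normrX (ger0_norm (ltW rp)); exact: lexx.
rewrite normrM.
apply: le_trans (ler_wpM2l (normr_ge0 _) (monom_le (nal al) Hy)) _.
rewrite expr_div_n mulrA -/(deg al).
have : 0 < rho ^+ deg al by rewrite exprn_gt0.
move=> rpp; rewrite -(ler_pM2r rpp).
have -> : `|c (nal al)| * q ^+ deg al * rho ^+ deg al = `|c (nal al)| * rho ^+ deg al * q ^+ deg al.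
  by ring.
have -> : M * q ^+ deg al / rho ^+ deg al * rho ^+ deg al = M * q ^+ deg al.
  by field; rewrite gt_eqF.
by apply: ler_wpM2r; first by rewrite exprn_ge0.
Qed.

Lemma geom_le n : \sum_(j < n) (2^-1 : R) ^+ j <= 2.
Proof.
suff : \sum_(j < n) (2^-1 : R) ^+ j = 2 - 2 * (2^-1) ^+ n.
  move=> ->; rewrite lerBlDr lerDl; by rewrite mulr_ge0 ?exprn_ge0.
elim: n => [|n IH]; first by rewrite big_ord0 expr0 mulr1 subrr.
rewrite big_ord_recr /= IH exprS; by field.
Qed.

Lemma sum_half N : \sum_(al : {ffun 'I_d -> 'I_N.+1}) (2^-1 : R) ^+ deg al <= 2 ^+ d.
Proof.
have -> : \sum_(al : {ffun 'I_d -> 'I_N.+1}) (2^-1 : R) ^+ deg al =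
   \prod_(i < d) \sum_(j : 'I_N.+1) (2^-1 : R) ^+ j.
  rewrite bigA_distr_bigA /=; apply: eq_bigr => al _.
  by rewrite /deg -prodrXr.
have -> : (2 : R) ^+ d = \prod_(i < d) 2 by rewrite prodr_const card_ord.
apply: ler_prod => i _.
rewrite sumr_ge0 //=; first exact: geom_le.
Qed.

Lemma pow_le (s : R) n : (2 <= n)%N -> 0 <= s <= 2^-1 -> s ^+ n <= 4 * s ^+ 2 * (2^-1) ^+ n.
Proof.
move=> + /andP[s0 s1]; elim: n => // n IH.
rewrite leq_eqVlt => /orP[/eqP <-|]; first by have -> : 4 * s ^+ 2 * (2^-1) ^+ 2 = s ^+ 2 by field.
rewrite ltnS => /IH H; rewrite exprS [(2^-1) ^+ _]exprS.
have -> : 4 * s ^+ 2 * (2^-1 * 2^-1 ^+ n) = 2^-1 * (4 * s ^+ 2 * 2^-1 ^+ n) by ring.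
by apply: ler_pM => //; rewrite exprn_ge0.
Qed.


Definition Eo n (j : 'I_d) : {ffun 'I_d -> 'I_n.+2} := [ffun i => inord (i == j)].
Definition Zo n : {ffun 'I_d -> 'I_n.+2} := [ffun _ => ord0].

Lemma nal_Eo n j : nal (Eo n j) = fun i => nat_of_bool (i == j).
Proof. by apply: funext => i; rewrite /nal ffunE inordK //; case: (i == j). Qed.

Lemma nal_Zo n : nal (Zo n) = fun _ => 0%N.
Proof. by apply: funext => i; rewrite /nal ffunE. Qed.

Lemma deg_Eo n j : deg (Eo n j) = 1%N.
Proof.
rewrite /deg nal_Eo (bigD1 j) //= eqxx big1 // => i /negbTE -> //.
Qed.

Lemma deg0 n (al : {ffun 'I_d -> 'I_n.+2}) : (deg al == 0)%N = (al == Zo n).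
Proof.
rewrite /deg sum_nat_eq0; apply/forallP/eqP => [H|->] /=.
  apply/ffunP => i; apply: val_inj; rewrite ffunE /=.
  by have := H i; rewrite /nal => /eqP.
by move=> i; rewrite nal_Zo.
Qed.

Lemma Eo_inj n : injective (@Eo n).
Proof.
move=> i j /ffunP /(_ i); rewrite !ffunE => /(congr1 val).
rewrite /= !inordK ?eqxx //; last by case: (i == j).
by case: eqP.
Qed.

Lemma deg1 n (al : {ffun 'I_d -> 'I_n.+2}) : (deg al == 1)%N = (al \in (@Eo n) @: setT).
Proof.
apply/eqP/imsetP => [H|[j _ ->]]; last exact: deg_Eo.
case: (pickP (fun j => al j != ord0)) => [j Hj|H0]; last first.
  exfalso; move: H; rewrite /deg big1 // => i _; rewrite /nal.
  by have := H0 i; move/negbFE/eqP => ->.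
exists j; first by rewrite in_setT.
move: H; rewrite /deg (bigD1 j) //= => H.
have aj : nal al j = 1%N.
  move: Hj H; rewrite /nal; case: (al j) => [[|[|k]] ?] //= _.
have rest : (\sum_(i | i != j) nal al i == 0)%N by move: H; rewrite aj; case: (\sum_(i | _) _).
move: rest; rewrite sum_nat_eq0 => /forallP rest.
apply/ffunP => i; apply: val_inj; rewrite ffunE /= inordK; last by case: (i == j).
case: eqP => [->|/eqP ne]; first exact: aj.
by have := rest i; rewrite ne /= => /eqP.
Qed.

Lemma split3 n (F : {ffun 'I_d -> 'I_n.+2} -> R) :
  \sum_al F al = \sum_(al | (deg al == 0)%N) F al + \sum_(al | (deg al == 1)%N) F al
                 + \sum_(al | (2 <= deg al)%N) F al.
Proof.
rewrite [LHS](bigID (fun al => deg al == 0)%N) /= -addrA; congr (_ + _).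
rewrite [LHS](bigID (fun al => deg al == 1)%N) /=.
by congr (_ + _); apply: eq_bigl => al; case: (deg al) => [|[|k]].
Qed.

Lemma monom_delta j (y : V) : monom (fun i => nat_of_bool (i == j)) y = y 0 j.
Proof.
rewrite /monom (bigD1 j) //= eqxx expr1 big1 ?mulr1 // => i /negbTE ->; exact: expr0.
Qed.

Lemma monom0 (y : V) : monom (fun _ => 0%N) y = 1.
Proof. by rewrite /monom big1 // => i _; rewrite expr0. Qed.

Lemma psum_bound (c : ('I_d -> nat) -> R) (rho M q : R) n (y : V) :
  0 < rho -> 0 <= q -> q <= rho / 2 -> (forall i, `|y 0 i| <= q) ->
  (forall N, box_abssum c (rho *: const_mx 1) N <= M) ->
  `|box_psum c y n.+1 - c (fun _ => 0%N) - \sum_j c (fun i => nat_of_bool (i == j)) * y 0 j|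
     <= 4 * M * 2 ^+ d * (q / rho) ^+ 2.
Proof.
move=> rp q0 qr Hy HM.
have M0 : 0 <= M.
  apply: le_trans (HM 0%N); rewrite /box_abssum; apply: sumr_ge0 => ? _; exact: normr_ge0.
rewrite /box_psum (split3 (fun al => c (nal al) * monom (nal al) y)).
rewrite (eq_bigl (pred1 (Zo n))); last by move=> al; rewrite /= deg0.
rewrite big_pred1_eq nal_Zo monom0 mulr1.
rewrite (eq_bigl (mem ((@Eo n) @: setT))); last by move=> al; rewrite /= deg1.
rewrite big_imset /=; last by move=> i j _ _; apply: Eo_inj.
rewrite (eq_bigl xpredT); last by move=> i; rewrite /= in_setT.
under eq_bigr do rewrite nal_Eo monom_delta.
set L := \sum_i _.
set Rm := \sum_(al | _) _.
have -> : c (fun _ => 0%N) + L + Rm - c (fun _ => 0%N) - L = Rm by ring.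
apply: le_trans (ler_norm_sum _ _ _) _.
have s0 : 0 <= q / rho by rewrite divr_ge0 // ltW.
have s1 : q / rho <= 2^-1 by rewrite ler_pdivrMr // mulrC; move: qr; rewrite mulrC.
apply: (@le_trans _ _ (\sum_(al | (2 <= deg al)%N) 4 * M * (q / rho) ^+ 2 * (2^-1) ^+ deg al)).
  apply: ler_sum => al H2.
  apply: le_trans (@term_le c rho M q _ al y rp q0 Hy HM) _.
  have -> : 4 * M * (q / rho) ^+ 2 * 2^-1 ^+ deg al = M * (4 * (q / rho) ^+ 2 * 2^-1 ^+ deg al) by ring.
  apply: ler_wpM2l => //; apply: pow_le => //.
  by rewrite s0 s1.
rewrite -mulr_sumr.
have -> : 4 * M * 2 ^+ d * (q / rho) ^+ 2 = 4 * M * (q / rho) ^+ 2 * 2 ^+ d by ring.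
apply: ler_wpM2l; first by apply: mulr_ge0; [apply: mulr_ge0 => //; lra | exact: exprn_ge0].
apply: le_trans (sum_half n.+1).
rewrite [X in _ <= X](bigID (fun al => 2 <= deg al)%N) /= lerDl.
by apply: sumr_ge0 => al _; rewrite exprn_ge0.
Qed.

Lemma ps_quad (c : ('I_d -> nat) -> R) (rho M q f0 : R) (y : V) :
  0 < rho -> 0 <= q -> q <= rho / 2 -> (forall i, `|y 0 i| <= q) ->
  (forall N, box_abssum c (rho *: const_mx 1) N <= M) ->
  box_psum c y @ \oo --> f0 ->
  `|f0 - c (fun _ => 0%N) - \sum_j c (fun i => nat_of_bool (i == j)) * y 0 j|
     <= 4 * M * 2 ^+ d * (q / rho) ^+ 2.
Proof.
move=> rp q0 qr Hy HM Hc.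
set K0 := c (fun _ => 0%N) + \sum_j c (fun i => nat_of_bool (i == j)) * y 0 j.
have Hc2 : (fun N => `|box_psum c y N - K0|) @ \oo --> `|f0 - K0|.
  apply: cvg_norm; apply: cvgB => //; exact: cvg_cst.
rewrite -addrA -opprD -/K0.
apply: (cvgr_to_le Hc2).
near=> N.
have : (0 < N)%N by near: N; exists 1%N.
move/prednK => <-.
rewrite /K0 opprD addrA; exact: psum_bound.
Unshelve. all: by end_near.
Qed.

End PS.

Section Main.
Variables (R : realType) (d : nat).
Notation V := 'rV[R]_d.

Lemma ball_dir (x u : V) (R0 : R) : enorm x < R0 ->
  exists2 tau : R, 0 < tau & forall t, `|t| <= tau -> enorm (x + t *: u) < R0.
Proof.
move=> hx; exists ((R0 - enorm x) / (enorm u + 1) / 2).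
  by rewrite !divr_gt0 ?subr_gt0 // ltr_wpDl ?enorm_ge0.
move=> t ht; apply: le_lt_trans (enormD _ _) _; rewrite enormZ.
have eu := enorm_ge0 u.
have hp : 0 < R0 - enorm x by rewrite subr_gt0.
have : `|t| * enorm u <= (R0 - enorm x) / (enorm u + 1) / 2 * enorm u.
  by apply: ler_wpM2r.
move=> H; rewrite -ltrBrDl; apply: le_lt_trans H _.
have -> : (R0 - enorm x) / (enorm u + 1) / 2 * enorm u = (R0 - enorm x) * (enorm u / ((enorm u + 1) * 2)).
  by field; rewrite gt_eqF // ltr_wpDl.
rewrite gtr_pMr // ltr_pdivrMr ?mulr_gt0 ?ltr_wpDl //; lra.
Qed.

Lemma coord_le_sum (w : V) j : `|w 0 j| <= \sum_i `|w 0 i|.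
Proof. by rewrite (bigD1 j) //= lerDl sumr_ge0. Qed.

Definition Lf (c : ('I_d -> nat) -> R) (y : V) : R :=
  \sum_j c (fun i => nat_of_bool (i == j)) * y 0 j.

Lemma LfZ c t (y : V) : Lf c (t *: y) = t * Lf c y.
Proof. rewrite /Lf mulr_sumr; apply: eq_bigr => j _. by rewrite mxE mulrCA. Qed.

Lemma Lf0 c : Lf c 0 = 0.
Proof. by rewrite -(scale0r 0) LfZ mul0r. Qed.

Lemma affineD (A : 'M[R]_d) (b x u : V) t :
  affine A b (t *: u + x) = affine A b x + t *: (u *m A).
Proof. by rewrite /affine mulmxDl scalemxAl [RHS]addrC addrA. Qed.

Lemma dir_bound (psi : V -> R) (v om : V) (h : R) (A : 'M[R]_d) (b x : V)
    (R0 r rho M : R) (c : ('I_d -> nat) -> R) :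
  0 < h -> 0 < rho -> 0 < r -> enorm x < R0 ->
  (forall x', enorm x' < R0 -> cube 2 (affine A b x' + om)) ->
  (forall y, enorm y < r -> cube 2 (affine A b x + om + y) ->
     box_psum c y @ \oo --> psi (affine A b x + om + y)) ->
  (forall N, box_abssum c (rho *: const_mx 1) N <= M) ->
  forall u : V, exists2 tau : R, 0 < tau & exists2 C : R, 0 <= C &
    forall t, t != 0 -> `|t| < tau ->
      `|(Phih psi v om h A b (t *: u + x) - Phih psi v om h A b x) / t
         - h^-1 * (Lf c (u *m A) + dotv v (u *m A))| <= C * `|t|.
Proof.
move=> hp rp r0 hx Hcube Hps HM u.
set p := affine A b x + om.
set K0 := 4 * M * 2 ^+ d.
have M0 : 0 <= M.
  apply: le_trans (HM 0%N); rewrite /box_abssum; apply: sumr_ge0 => ? _; exact: normr_ge0.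
have K00 : 0 <= K0 by rewrite /K0 !mulr_ge0 ?exprn_ge0 //; lra.
have Hq : forall y q, enorm y < r -> cube 2 (p + y) -> 0 <= q -> q <= rho / 2 ->
    (forall i, `|y 0 i| <= q) -> `|psi (p + y) - c (fun _ => 0%N) - Lf c y| <= K0 * (q / rho) ^+ 2.
  move=> y q hy cy q0 qr Hy; apply: ps_quad => //; exact: Hps.
have pc : psi p = c (fun _ => 0%N).
  have H0 : `|psi (p + 0) - c (fun _ => 0%N) - Lf c 0| <= K0 * (0 / rho) ^+ 2.
    apply: Hq => //; first by rewrite enorm0.
    - by rewrite addr0; exact: Hcube.
    - by rewrite divr_ge0 ?ltW.
    - by move=> i; rewrite mxE normr0.
  rewrite addr0 Lf0 subr0 mul0r expr0n /= mulr0 normr_le0 subr_eq0 in H0.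
  exact/eqP.
set w := u *m A.
set W := \sum_i `|w 0 i|.
have W0 : 0 <= W by apply: sumr_ge0.
have ew := enorm_ge0 w.
have [t1 t1p Ht1] := ball_dir u hx.
exists (Num.min t1 (Num.min (r / (enorm w + 1)) (rho / 2 / (W + 1)))).
  by rewrite !lt_min t1p !divr_gt0 ?ltr_wpDl.
exists (h^-1 * K0 * W ^+ 2 / rho ^+ 2).
  by rewrite !mulr_ge0 ?invr_ge0 ?exprn_ge0 // ltW.
move=> t t0; rewrite !lt_min => /and3P[tl1 tl2 tl3].
have tp : 0 < `|t| by rewrite normr_gt0.
set y := t *: w.
have hy1 : enorm y < r.
  rewrite /y enormZ; rewrite ltr_pdivlMr ?ltr_wpDl // in tl2.
  apply: le_lt_trans tl2; apply: ler_wpM2l; [exact: ltW | lra].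
have eqp : affine A b (t *: u + x) + om = p + y by rewrite affineD addrAC.
have hy2 : cube 2 (p + y).
  rewrite -eqp; apply: Hcube; rewrite addrC; apply: Ht1; exact: ltW.
have q0 : 0 <= `|t| * W by rewrite mulr_ge0.
have qr : `|t| * W <= rho / 2.
  rewrite ltr_pdivlMr ?ltr_wpDl // in tl3.
  apply: ltW; apply: le_lt_trans tl3; apply: ler_wpM2l; [exact: ltW | lra].
have Hyc : forall i, `|y 0 i| <= `|t| * W.
  move=> i; rewrite /y mxE normrM; apply: ler_wpM2l; [exact: ltW | exact: coord_le_sum].
have Hb := Hq y _ hy1 hy2 q0 qr Hyc.
rewrite /y LfZ in Hb.
have -> : (Phih psi v om h A b (t *: u + x) - Phih psi v om h A b x) / t
         - h^-1 * (Lf c w + dotv v w)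
        = h^-1 * (psi (p + y) - c (fun _ => 0%N) - t * Lf c w) / t.
  rewrite /Phih /Phi affineD dotvDr dotvZr.
  have -> : affine A b x + t *: w + om = p + y by rewrite addrAC.
  rewrite -/p pc; field.
  by rewrite t0 gt_eqF.
have hi : 0 <= h^-1 by rewrite invr_ge0 ltW.
rewrite normrM normrM normrV ?unitfE // (ger0_norm hi).
apply: (@le_trans _ _ (h^-1 * (K0 * (`|t| * W / rho) ^+ 2) * `|t|^-1)).
  apply: ler_wpM2r; first by rewrite invr_ge0 normr_ge0.
  apply: ler_wpM2l => //; by rewrite invr_ge0 ltW.
rewrite le_eqVlt; apply/orP; left; apply/eqP.
field; by rewrite ?gt_eqF.
Qed.

Lemma Lf_dot c (v y : V) : Lf c y + dotv v y = \sum_j (c (fun i => nat_of_bool (i == j)) + v 0 j) * y 0 j.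
Proof. by rewrite /Lf /dotv -big_split /=; apply: eq_bigr => j _; rewrite mulrDl. Qed.

Lemma Dl_dot c (h : R) (A : 'M[R]_d) (v w : V) :
  dotv (\row_i (h^-1 * (Lf c (delta_mx 0 i *m A) + dotv v (delta_mx 0 i *m A)))) w
  = h^-1 * (Lf c (w *m A) + dotv v (w *m A)).
Proof.
rewrite Lf_dot /dotv.
under eq_bigr do rewrite mxE Lf_dot.
under [in RHS]eq_bigr do rewrite mxE.
under eq_bigr do under eq_bigr do rewrite -rowE mxE.
rewrite mulr_sumr.
under eq_bigr do rewrite mulr_sumr mulr_suml.
under [in RHS]eq_bigr do rewrite mulr_sumr mulr_sumr.
rewrite exchange_big /=; apply: eq_bigr => j _; apply: eq_bigr => i _.
by rewrite mulrA mulrA mulrAC -!mulrA; congr (_ * _); rewrite mulrCA.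
Qed.

End Main.

Unset Implicit Arguments.

Theorem lemma4p5 (R : realType) (d : nat) (psi : 'rV[R]_d -> R)
    (k : nat) (m c_phi h0 R0 : R)
    (v om : 'rV[R]_d) (h : R) (A : 'M[R]_d) (b : 'rV[R]_d) :
  (2 <= d <= 4)%N ->
  (* phi = psi on [-1,1]^d, psi analytic convex on [-2,2]^d, finite type on [-1,1]^d *)
  analytic_on (cube 2) psi ->
  convex_on (cube 2) psi ->
  finite_type_km (cube 1) psi k m ->
  (* the constant c_phi *)
  0 < c_phi ->
  (forall (v' om' : 'rV[R]_d), eball (4^-1) om' -> grad psi om' = - v' ->
     forall x, eball (2^-1) x -> (c_phi * enorm x) ^+ k <= Phi psi v' om' x) ->
  (* h_o *)
  0 < h0 -> h0 <= (c_phi / 4) ^+ k ->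
  (* v, omega_v *)
  eball (4^-1) om -> grad psi om = - v ->
  (* h and T_v^h *)
  0 < h -> h < h0 ->
  A \in unitmx ->
  (forall x, eball 1 x -> sublev psi v om h (affine A b x)) ->
  (forall x, sublev psi v om h (affine A b x) -> eball d%:R x) ->
  (* standing assumption on Phi_v^h and B_{R_o} *)
  100 * d%:R <= R0 ->
  (forall x, eball R0 x -> cube 2 (affine A b x + om)) ->
  convex_on (eball R0) (Phih psi v om h A b) ->
  finite_type_on (eball R0) (Phih psi v om h A b) ->
  (* conclusion on D_{v,o}^h *)
  forall x, eball R0 x ->
    2^-1 <= Phih psi v om h A b x <= 2 ->
    (20 * d%:R)^-1 <= enorm (grad (Phih psi v om h A b) x).
Proof.
move=> /andP[d2 d4] Han Hcvx Hft cp Hcphi h0p h0le omb gradom hp hh0 Aunit Hsub1 Hsub2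
  HR0 Hcube Hconv Hfin x xb /andP[Hfx1 Hfx2].
set f := Phih psi v om h A b.
rewrite -/f in Hfx1 Hfx2.
have dpos : (0 : R) < d%:R by rewrite ltr0n; apply: leq_trans d2.
set p := affine A b x + om.
have cp2 : cube 2 p := Hcube x xb.
have [r r0 [c Hc]] := Han p cp2.
set ust : 'rV[R]_d := const_mx 1 *m invmx A.
have [t1 t1p Ht1] := ball_dir ust xb.
set e1 := enorm (const_mx 1 : 'rV[R]_d).
have e10 : 0 <= e1 by exact: enorm_ge0.
set rho := Num.min t1 (r / (e1 + 1)).
have rp : 0 < rho by rewrite lt_min t1p divr_gt0 // ltr_wpDl.
have hr1 : enorm (rho *: (const_mx 1 : 'rV[R]_d)) < r.
  rewrite enormZ ger0_norm ?ltW // -/e1.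
  have : rho <= r / (e1 + 1) by rewrite ge_min lexx orbT.
  rewrite -(ler_pM2r (_ : 0 < e1 + 1)) ?ltr_wpDl // mulfVK ?gt_eqF ?ltr_wpDl // => H.
  apply: lt_le_trans H; rewrite ltr_pM2l // ltrDl; exact: ltr01.
have hr2 : cube 2 (p + rho *: (const_mx 1 : 'rV[R]_d)).
  have -> : p + rho *: (const_mx 1 : 'rV[R]_d) = affine A b (rho *: ust + x) + om.
    by rewrite affineD /ust mulmxKV // addrAC.
  apply: Hcube; rewrite addrC; apply: Ht1.
  by rewrite ger0_norm ?(ltW rp) // /rho ge_min lexx.
have [[M HM] _] := Hc _ hr1 hr2.
have Hps : forall y, enorm y < r -> cube 2 (affine A b x + om + y) ->
     box_psum c y @ \oo --> psi (affine A b x + om + y).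
  by move=> y hy1 hy2; have [_ ?] := Hc y hy1 hy2.
set Dl := fun u : 'rV[R]_d => h^-1 * (Lf c (u *m A) + dotv v (u *m A)).
have Hdir := dir_bound v hp rp r0 xb Hcube Hps HM.
have Hder : forall u, 'D_u f x = Dl u.
  move=> u; have [tau taup [C C0 HC]] := Hdir u.
  exact: (derive_of_bound taup C0 HC).
have Hdot : forall w, dotv (grad f x) w = Dl w.
  move=> w; have -> : grad f x = \row_i Dl (delta_mx 0 i).
    by apply/rowP => i; rewrite !mxE Hder.
  exact: Dl_dot.
set x0 : 'rV[R]_d := - b *m invmx A.
have x0A : x0 *m A = - b by rewrite /x0 mulmxKV.
have Tx0 : affine A b x0 = 0 by rewrite /affine x0A addNr.
have fx0 : f x0 = 0 by rewrite /f /Phih /Phi Tx0 add0r dotv0r addr0 subrr mulr0.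
have x0d : enorm x0 < d%:R.
  apply: Hsub2; rewrite Tx0; split; first by rewrite /eball /= enorm0 invr_gt0.
  rewrite /Phi add0r dotv0r addr0 subrr; exact: divr_gt0.
have dR0 : d%:R <= R0 by apply: le_trans HR0; rewrite ler_peMl ?ltW //; lra.
have x0b : enorm x0 < R0 by apply: lt_le_trans dR0.
have Tcomb : forall t, affine A b (t *: x + (1 - t) *: x0) = t *: affine A b x.
  move=> t; rewrite /affine mulmxDl -!scalemxAl x0A.
  set z := x *m A; apply/rowP => j; rewrite !mxE; ring.
have PhiT : forall y, Phi psi v om (affine A b y) = h * f y.
  by move=> y; rewrite /f /Phih mulrA mulfV ?gt_eqF // mul1r.
have Hcv : forall t, 0 <= t <= 1 -> f (t *: x + (1 - t) *: x0) <= t * f x.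
  move=> t ht; have := Hconv x x0 t xb x0b ht; by rewrite -/f fx0 mulr0 addr0.
have Hdist : enorm (x - x0) < 10 * d%:R.
  set z := affine A b x.
  case: (ltP (enorm z) (5 / 2)) => Hz.
  - set y := 5^-1 *: x + (1 - 5^-1) *: x0.
    have yd : enorm y < d%:R.
      apply: Hsub2; split.
        rewrite /eball /= Tcomb enormZ ger0_norm; last by rewrite invr_ge0; lra.
        rewrite -/z; lra.
      rewrite PhiT.
      have : f y <= 5^-1 * f x by apply: Hcv; apply/andP; split; lra.
      move=> H; have : h * f y <= h * (5^-1 * f x) by rewrite ler_pM2l.
      move=> H2; apply: le_lt_trans H2 _.
      rewrite ltr_pM2l //; lra.
    have -> : x - x0 = 5 *: (y - x0).
      by apply/rowP => j; rewrite /y !mxE; field.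
    rewrite enormZ ger0_norm; last lra.
    have := enormD y (- x0); rewrite enormN => H.
    have : enorm (y - x0) < 2 * d%:R by apply: le_lt_trans H _; lra.
    lra.
  - exfalso.
    have zp : 0 < enorm z by apply: lt_le_trans Hz; lra.
    set t := (4 * enorm z)^-1.
    have tp : 0 < t by rewrite invr_gt0 mulr_gt0.
    have t10 : t <= 10^-1.
      rewrite /t lef_pV2 ?posrE ?mulr_gt0 //; lra.
    have etz : enorm (t *: z) = 4^-1.
      by rewrite enormZ ger0_norm ?ltW // /t; field; rewrite gt_eqF.
    have := Hcphi v om omb gradom (t *: z).
    rewrite /eball /= etz => /(_ (ltac:(lra))).
    rewrite -Tcomb PhiT => H.
    have : f (t *: x + (1 - t) *: x0) <= t * f x by apply: Hcv; apply/andP; split; lra.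
    move=> H2.
    have H3 : h * f (t *: x + (1 - t) *: x0) <= h * (t * f x) by rewrite ler_pM2l.
    have H4 : t * f x <= 5^-1 by nra.
    have H5 : (c_phi * 4^-1) ^+ k <= h * 5^-1.
      apply: le_trans H _; apply: le_trans H3 _; rewrite ler_pM2l //.
    have : h0 <= (c_phi * 4^-1) ^+ k by [].
    lra.
set w := x0 - x.
have [tau taup [C C0 HC]] := Hdir w.
have HDl : Dl w <= - f x.
  apply/ler_addgt0Pr => e e0.
  set t := Num.min (tau / 2) (Num.min (2^-1) (e / (C + 1))).
  have tp : 0 < t.
    rewrite !lt_min; apply/andP; split; [|apply/andP; split]; first by rewrite divr_gt0.
    - by rewrite invr_gt0.
    - by rewrite divr_gt0 // ltr_wpDl.
  have tt : t <= tau / 2 by rewrite ge_min lexx.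
  have th : t <= 2^-1 by rewrite /t !ge_min lexx !orbT.
  have te : t <= e / (C + 1) by rewrite /t !ge_min lexx !orbT.
  have H1 := HC t (lt0r_neq0 tp) (ltac:(rewrite gtr0_norm //; lra)).
  rewrite (gtr0_norm tp) in H1.
  have eqt : t *: w + x = t *: x0 + (1 - t) *: x.
    by apply/rowP => j; rewrite /w !mxE; ring.
  have H2 : f (t *: w + x) <= (1 - t) * f x.
    rewrite eqt; have := Hconv x0 x t x0b xb (ltac:(apply/andP; split; lra)).
    by rewrite -/f fx0 mulr0 add0r.
  have H3 : (f (t *: w + x) - f x) / t <= - f x.
    rewrite ler_pdivrMr //; nra.
  have H4 : C * t <= e.
    rewrite ler_pdivlMr ?ltr_wpDl // in te.
    apply: le_trans te; rewrite mulrC ler_pM2l //; lra.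
  move: H1; rewrite ler_norml => /andP[H1 _].
  rewrite -/f in H1 H2 H3.
  rewrite /Dl; lra.
have Hfin2 : 2^-1 <= enorm (grad f x) * (10 * d%:R).
  apply: le_trans Hfx1 _.
  have : f x <= - dotv (grad f x) w by rewrite Hdot; lra.
  move=> H; apply: le_trans H _.
  apply: le_trans (_ : `|dotv (grad f x) w| <= _).
    by rewrite -normrN ler_norm.
  apply: le_trans (CSabs _ _) _.
  apply: ler_wpM2l; first exact: enorm_ge0.
  by rewrite /w -opprB enormN ltW.
rewrite -(ler_pM2r (_ : 0 < 10 * d%:R)); last by rewrite mulr_gt0 //; lra.
apply: le_trans Hfin2; rewrite le_eqVlt; apply/orP; left; apply/eqP; field.
by rewrite gt_eqF.
Qed.
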